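(* For every $v\in\{0,\dots,n-1\}$, every $\pi\in\Pi$ and every $f_{\mathcal E_v^+}\in\mathcal F_v$, $$\sum_{e\in\mathcal E_v^+}\sigma_e\big(\lambda^\pi_v\,G^v_e(f_{\mathcal E_v^+},\pi)-f^\pi_e\big)\le0,$$ where $\lambda^\pi_v:=\sum_{e\in\mathcal E_v^+}f^\pi_e$ and $\sigma_e:=\mathrm{sgn}(f_e-f^\pi_e)$ (with $\mathrm{sgn}(0)=0$).
   Context: $\mathcal G=(\mathcal V,\mathcal E)$ is a finite directed graph with $\mathcal V=\{0,1,\dots,n\}$, containing no directed cycle, in which node $0$ is the unique node with no incoming link, node $n$ is the unique node with no outgoing link, there is a directed path from every node to $n$, and every link $(u,v)\in\mathcal E$ satisfies $u<v$. For $v\in\mathcal V$, $\mathcal E_v^-$ and $\mathcal E_v^+$ are the sets of links entering and leaving $v$. Each link $e$ has a capacity $C_e\in(0,+\infty]$; $\mathcal F_v:=\prod_{e\in\mathcal E_v^+}[0,C_e)$. $\mathcal P$ is the set of directed paths from $0$ to $n$, $A$ the link-path incidence matrix ($A_{ep}=1$ iff $e\in p$), $\mathcal S(\cdot)$ denotes a probability simplex, $\Pi:=\{\pi\in\mathcal S(\mathcal P):(A\pi)_e<C_e\ \forall e\}$, and $f^\pi:=A\pi$. For each $v\in\{0,\dots,n-1\}$ a continuously differentiable $G^v:\mathcal F_v\times\Pi\to\mathcal S(\mathcal E_v^+)$ is given such that (consistency) $(\sum_{j\in\mathcal E_v^+}f^\pi_j)\,G^v_e(f^\pi_{\mathcal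 E_v^+},\pi)=f^\pi_e$ for all $\pi\in\Pi$, $e\in\mathcal E_v^+$, where $f^\pi_{\mathcal E_v^+}=(f^\pi_j)_{j\in\mathcal E_v^+}$; and (cooperativity) $\partial G^v_j(f_{\mathcal E_v^+},\pi)/\partial f_e\ge0$ for all $\pi\in\Pi$, $f_{\mathcal E_v^+}\in\mathcal F_v$, $j\neq e\in\mathcal E_v^+$. *)

(* Defs.v *)
From Stdlib Require Import Reals Lra List Bool Arith.
Import ListNotations.
Open Scope R_scope.

Definition edge := (nat * nat)%type.

Definition edge_eqb (a b : edge) : bool :=
  Nat.eqb (fst a) (fst b) && Nat.eqb (snd a) (snd b).

Definition lsum {A : Type} (l : list A) (g : A -> R) : R :=
  fold_right (fun a acc => g a + acc) 0 l.

(* capacities in (0,+oo]: [None] encodes +oo *)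
Definition below_cap (x : R) (c : option R) : Prop :=
  match c with None => True | Some c => x < c end.

Definition capdom (c : option R) (x : R) : Prop := 0 <= x /\ below_cap x c.

Definition sgn (x : R) : R :=
  if Rlt_dec 0 x then 1 else if Rlt_dec x 0 then -1 else 0.

Definition out_edges (E : list edge) (v : nat) : list edge :=
  filter (fun e => Nat.eqb (fst e) v) E.

Inductive is_path (E : list edge) : nat -> nat -> list edge -> Prop :=
| path_nil : forall u, is_path E u u []
| path_cons : forall u x w p, In (u, x) E -> is_path E x w p ->
    is_path E u w ((u, x) :: p).

Definition good_graph (n : nat) (E : list edge) : Prop :=
  NoDup E /\
  (forall u w, In (u, w) E -> (u < w)%nat /\ (w <= n)%nat) /\
  (forall w, (1 <= w <= n)%nat -> exists u, In (u, w) E) /\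
  (forall u, (u < n)%nat -> exists w, In (u, w) E) /\
  (forall u, (u <= n)%nat -> exists p, is_path E u n p).

Definition enum_paths (n : nat) (E : list edge) (Ps : list (list edge)) : Prop :=
  NoDup Ps /\ forall p, In p Ps <-> is_path E 0 n p.

Definition flow (Ps : list (list edge)) (pi : list edge -> R) (e : edge) : R :=
  lsum Ps (fun p => if existsb (edge_eqb e) p then pi p else 0).

Definition inPi (n : nat) (E : list edge) (C : edge -> option R)
  (Ps : list (list edge)) (pi : list edge -> R) : Prop :=
  (forall p, ~ is_path E 0 n p -> pi p = 0) /\
  (forall p, 0 <= pi p) /\
  lsum Ps pi = 1 /\
  (forall e, In e E -> below_cap (flow Ps pi e) (C e)).

(* f_{E_v^+} in F_v (only the coordinates on E_v^+ matter) *)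
Definition inF (E : list edge) (C : edge -> option R) (v : nat) (f : edge -> R) : Prop :=
  forall e, In e (out_edges E v) -> capdom (C e) (f e).

Definition lam (E : list edge) (Ps : list (list edge)) (pi : list edge -> R) (v : nat) : R :=
  lsum (out_edges E v) (flow Ps pi).

Definition upd (f : edge -> R) (e : edge) (x : R) : edge -> R :=
  fun e' => if edge_eqb e' e then x else f e'.

(* derivative of phi at x relative to the domain dom (one-sided at boundary) *)
Definition deriv_within (dom : R -> Prop) (phi : R -> R) (x l : R) : Prop :=
  forall eps, 0 < eps -> exists delta, 0 < delta /\
    forall h, h <> 0 -> Rabs h < delta -> dom (x + h) ->
      Rabs ((phi (x + h) - phi x) / h - l) < eps.

Definition cont_on_F (E : list edge) (C : edge -> option R) (v : nat)
  (h : (edge -> R) -> R) : Prop :=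
  forall f, inF E C v f -> forall eps, 0 < eps -> exists delta, 0 < delta /\
    forall g, inF E C v g ->
      (forall e, In e (out_edges E v) -> Rabs (g e - f e) < delta) ->
      Rabs (h g - h f) < eps.

(* Main.v *)
Require Import Defs.
From Stdlib Require Import Reals List.
From Stdlib Require Import Lra Classical FunctionalExtensionality Bool Arith.
Open Scope R_scope.

Lemma dw_opp dom phi x l : deriv_within dom phi x l ->
  deriv_within dom (fun y => - phi y) x (- l).
Proof.
  intros H eps Heps. destruct (H eps Heps) as [d [Hd Hh]]. exists d; split; auto.
  intros h H1 H2 H3. specialize (Hh h H1 H2 H3).
  replace ((- phi (x + h) - - phi x) / h - - l) with (- ((phi (x + h) - phi x) / h - l))
    by (field; auto).
  now rewrite Rabs_Ropp.
Qed.

Lemma dw_plus dom p1 p2 x l1 l2 : deriv_within dom p1 x l1 -> deriv_within dom p2 x l2 ->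
  deriv_within dom (fun y => p1 y + p2 y) x (l1 + l2).
Proof.
  intros H1 H2 eps Heps.
  destruct (H1 (eps/2)) as [d1 [Hd1 Hh1]]; [lra|].
  destruct (H2 (eps/2)) as [d2 [Hd2 Hh2]]; [lra|].
  exists (Rmin d1 d2); split; [apply Rmin_pos; auto|].
  intros h Hh0 Hh Hdom.
  assert (A1 := Hh1 h Hh0 (Rlt_le_trans _ _ _ Hh (Rmin_l _ _)) Hdom).
  assert (A2 := Hh2 h Hh0 (Rlt_le_trans _ _ _ Hh (Rmin_r _ _)) Hdom).
  replace ((p1 (x + h) + p2 (x + h) - (p1 x + p2 x)) / h - (l1 + l2)) with
    (((p1 (x + h) - p1 x) / h - l1) + ((p2 (x + h) - p2 x) / h - l2)) by (field; auto).
  eapply Rle_lt_trans; [apply Rabs_triang|]. lra.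
Qed.

Lemma dw_scal dom p x l c : deriv_within dom p x l ->
  deriv_within dom (fun y => c * p y) x (c * l).
Proof.
  intros H eps Heps.
  assert (Hc : 0 < Rabs c + 1) by (pose proof (Rabs_pos c); lra).
  destruct (H (eps / (Rabs c + 1))) as [d [Hd Hh]].
  { apply Rdiv_lt_0_compat; auto. }
  exists d; split; auto. intros h H1 H2 H3. specialize (Hh h H1 H2 H3).
  replace ((c * p (x + h) - c * p x) / h - c * l) with (c * ((p (x + h) - p x) / h - l))
    by (field; auto).
  rewrite Rabs_mult.
  set (r := Rabs ((p (x + h) - p x) / h - l)) in *.
  assert (0 <= r) by apply Rabs_pos.
  assert (Rabs c * r <= (Rabs c + 1) * r) by nra.
  assert ((Rabs c + 1) * r < (Rabs c + 1) * (eps / (Rabs c + 1))).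
  { apply Rmult_lt_compat_l; auto. }
  replace ((Rabs c + 1) * (eps / (Rabs c + 1))) with eps in * by (field; lra).
  lra.
Qed.

Lemma dw_const dom x k : deriv_within dom (fun _ => k) x 0.
Proof.
  intros eps Heps. exists 1; split; [lra|]. intros h H1 H2 H3.
  replace ((k - k) / h - 0) with 0 by (field; auto). rewrite Rabs_R0; auto.
Qed.

Lemma dw_lsum {A : Type} dom x (L : list A) (phis : A -> R -> R) (ls : A -> R) :
  (forall j, In j L -> deriv_within dom (phis j) x (ls j)) ->
  deriv_within dom (fun y => lsum L (fun j => phis j y)) x (lsum L ls).
Proof.
  induction L as [|a L IH]; intros H.
  - unfold lsum; simpl. apply dw_const.
  - unfold lsum; simpl. fold (lsum L ls).
    change (deriv_within dom (fun y => phis a y + lsum L (fun j => phis j y)) x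
      (ls a + lsum L ls)).
    apply dw_plus.
    + apply H; simpl; auto.
    + apply IH; intros; apply H; simpl; auto.
Qed.

Lemma dw_const_zero dom phi x l k : (forall y, dom y -> phi y = k) -> dom x ->
  (forall d, 0 < d -> exists h, h <> 0 /\ Rabs h < d /\ dom (x + h)) ->
  deriv_within dom phi x l -> l = 0.
Proof.
  intros Hk Hx Hh H.
  destruct (Req_dec l 0) as [E|NE]; auto. exfalso.
  assert (Hl : 0 < Rabs l) by (apply Rabs_pos_lt; auto).
  destruct (H (Rabs l) Hl) as [d [Hd Hd2]].
  destruct (Hh d Hd) as [h [H1 [H2 H3]]].
  specialize (Hd2 h H1 H2 H3). rewrite (Hk _ H3), (Hk _ Hx) in Hd2.
  replace ((k - k) / h - l) with (- l) in Hd2 by (field; auto).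
  rewrite Rabs_Ropp in Hd2. lra.
Qed.

Lemma mono_inc_eps dom rho D a b eps : a <= b -> 0 < eps ->
  (forall x, a <= x <= b -> dom x) ->
  (forall x, a <= x <= b -> deriv_within dom rho x (D x)) ->
  (forall x, a <= x <= b -> 0 <= D x) ->
  rho a - eps * (b - a) <= rho b.
Proof.
  intros Hab Heps Hdom Hder HD.
  set (S := fun y => a <= y <= b /\ rho a - eps * (y - a) <= rho y).
  assert (HSa : S a) by (unfold S; split; [lra| lra]).
  assert (Hb : bound S) by (exists b; intros y [Hy _]; lra).
  destruct (completeness S Hb (ex_intro _ a HSa)) as [s [Hub Hlub]].
  assert (Has : a <= s) by (apply Hub; auto).
  assert (Hsb : s <= b) by (apply Hlub; intros y [Hy _]; lra).
  destruct (Hder s (conj Has Hsb) eps Heps) as [d [Hd Hdd]].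
  assert (HDs := HD s (conj Has Hsb)).
  assert (HSs : S s).
  { destruct (Req_dec s a) as [Esa|Nsa]; [subst; auto|].
    set (m := Rmin d (s - a)).
    assert (Hm : 0 < m) by (apply Rmin_pos; lra).
    destruct (classic (exists y, S y /\ s - m < y)) as [[y [[Hy1 Hy2] Hy3]]|NE].
    - assert (Hys : y <= s) by (apply Hub; split; auto).
      destruct (Req_dec y s) as [Eys|Nys]; [subst; split; auto; lra|].
      set (h := y - s).
      assert (Hh0 : h <> 0) by (unfold h; lra).
      assert (Hm1 : m <= d) by apply Rmin_l.
      assert (Hhd : Rabs h < d).
      { unfold h; rewrite Rabs_left; lra. }
      assert (Hdm : dom (s + h)) by (unfold h; replace (s + (y - s)) with y by ring; apply Hdom; lra).
      specialize (Hdd h Hh0 Hhd Hdm).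
      apply Rabs_def2 in Hdd. destruct Hdd as [_ Hq].
      replace (s + h) with y in Hq by (unfold h; ring).
      set (q := (rho y - rho s) / h) in *.
      assert (Eq : rho y - rho s = q * h) by (unfold q; field; auto).
      assert (q * h < - eps * h) by (unfold h in *; nra).
      split; [lra|]. unfold h in *; nra.
    - exfalso.
      assert (Hub2 : is_upper_bound S (s - m)).
      { intros y Hy. apply Rnot_lt_le. intro Hlt. apply NE. exists y; auto. }
      specialize (Hlub _ Hub2). lra. }
  destruct (Req_dec s b) as [Esb|Nsb].
  - subst. destruct HSs; auto.
  - exfalso.
    set (h := Rmin (d / 2) (b - s)).
    assert (Hh : 0 < h) by (apply Rmin_pos; lra).
    assert (Hh1 : h <= d / 2) by apply Rmin_l.
    assert (Hh2 : h <= b - s) by apply Rmin_r.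
    assert (Hhd : Rabs h < d) by (rewrite Rabs_pos_eq; lra).
    assert (Hdm : dom (s + h)) by (apply Hdom; lra).
    specialize (Hdd h ltac:(lra) Hhd Hdm).
    apply Rabs_def2 in Hdd. destruct Hdd as [_ Hq].
    set (q := (rho (s + h) - rho s) / h) in *.
    assert (Eq : rho (s + h) - rho s = q * h) by (unfold q; field; lra).
    assert (q * h > - eps * h) by nra.
    destruct HSs as [_ HSs].
    assert (S (s + h)) by (split; [lra| nra]).
    specialize (Hub _ H0). lra.
Qed.

Lemma mono_inc dom rho D a b : a <= b ->
  (forall x, a <= x <= b -> dom x) ->
  (forall x, a <= x <= b -> deriv_within dom rho x (D x)) ->
  (forall x, a <= x <= b -> 0 <= D x) ->
  rho a <= rho b.
Proof.
  intros Hab Hdom Hder HD.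
  apply Rnot_lt_le. intro Hlt.
  set (eps := (rho a - rho b) / (b - a + 1)).
  assert (He : 0 < eps) by (unfold eps; apply Rdiv_lt_0_compat; lra).
  pose proof (mono_inc_eps dom rho D a b eps Hab He Hdom Hder HD).
  assert (eps * (b - a + 1) = rho a - rho b) by (unfold eps; field; lra).
  nra.
Qed.

Lemma mono_dec dom rho D a b : a <= b ->
  (forall x, a <= x <= b -> dom x) ->
  (forall x, a <= x <= b -> deriv_within dom rho x (D x)) ->
  (forall x, a <= x <= b -> D x <= 0) ->
  rho b <= rho a.
Proof.
  intros Hab Hdom Hder HD.
  assert (- rho a <= - rho b); [|lra].
  apply (mono_inc dom (fun y => - rho y) (fun y => - D y) a b Hab Hdom).
  - intros; apply dw_opp; auto.
  - intros x Hx; specialize (HD x Hx); lra.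
Qed.

Lemma lsum_le {A : Type} (L : list A) f1 f2 :
  (forall j, In j L -> f1 j <= f2 j) -> lsum L f1 <= lsum L f2.
Proof.
  induction L; intros H; unfold lsum; simpl; [lra|].
  apply Rplus_le_compat; [apply H; simpl; auto|]. apply IHL; intros; apply H; simpl; auto.
Qed.

Lemma lsum_ext {A : Type} (L : list A) f1 f2 :
  (forall j, In j L -> f1 j = f2 j) -> lsum L f1 = lsum L f2.
Proof.
  induction L; intros H; unfold lsum; simpl; [lra|].
  rewrite H by (simpl; auto). f_equal. apply IHL; intros; apply H; simpl; auto.
Qed.

Lemma lsum_nonneg {A : Type} (L : list A) f :
  (forall j, In j L -> 0 <= f j) -> 0 <= lsum L f.
Proof.
  intros H. replace 0 with (lsum L (fun _ => 0)).
  - apply lsum_le; auto.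
  - induction L; unfold lsum in *; simpl; auto. rewrite IHL; [ring|]. intros; apply H; simpl; auto.
Qed.

Lemma lsum_lin {A : Type} (L : list A) f g c :
  lsum L (fun j => c * f j - c * g j) = c * lsum L f - c * lsum L g.
Proof. induction L; unfold lsum in *; simpl; [ring|]. rewrite IHL; ring. Qed.

Lemma lsum_opp {A : Type} (L : list A) f :
  lsum L (fun j => - f j) = - lsum L f.
Proof. induction L; unfold lsum in *; simpl; [ring|]. rewrite IHL; ring. Qed.

Lemma edge_eqb_eq a b : edge_eqb a b = true <-> a = b.
Proof.
  destruct a, b; unfold edge_eqb; simpl. rewrite andb_true_iff, !Nat.eqb_eq.
  split; [intros [-> ->]; auto | intros H; inversion H; auto].
Qed.

Lemma edge_dec (a b : edge) : {a = b} + {a <> b}.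
Proof. decide equality; apply Nat.eq_dec. Qed.

Lemma upd_same g e x : upd g e x e = x.
Proof. unfold upd. assert (edge_eqb e e = true) by (apply edge_eqb_eq; auto). now rewrite H. Qed.

Lemma upd_upd g e x y : upd (upd g e x) e y = upd g e y.
Proof. apply functional_extensionality; intro e'. unfold upd. destruct (edge_eqb e' e); auto. Qed.

Lemma upd_id g e : upd g e (g e) = g.
Proof.
  apply functional_extensionality; intro e'. unfold upd.
  destruct (edge_eqb e' e) eqn:Q; auto. apply edge_eqb_eq in Q; subst; auto.
Qed.

Lemma sgn_bound x : -1 <= sgn x <= 1.
Proof. unfold sgn; destruct (Rlt_dec 0 x); [lra|]; destruct (Rlt_dec x 0); lra. Qed.

Lemma capdom_h c x : capdom c x ->
  forall d, 0 < d -> exists h, h <> 0 /\ Rabs h < d /\ capdom c (x + h).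
Proof.
  intros [Hx Hc] d Hd. destruct c as [c|]; simpl in Hc.
  - set (h := Rmin (d / 2) ((c - x) / 2)).
    assert (0 < h) by (apply Rmin_pos; lra).
    assert (h <= d / 2) by apply Rmin_l. assert (h <= (c - x) / 2) by apply Rmin_r.
    exists h. split; [lra|]. split; [rewrite Rabs_pos_eq; lra|]. split; simpl; lra.
  - exists (d / 2). split; [lra|]. split; [rewrite Rabs_pos_eq; lra|]. split; simpl; auto; lra.
Qed.

Lemma capdom_between c a b y : capdom c a -> capdom c b -> a <= y <= b -> capdom c y.
Proof.
  intros [Ha Hca] [Hb Hcb] Hy. split; [lra|]. destruct c; simpl in *; auto; lra.
Qed.

Lemma inF_upd E C v g e x : inF E C v g -> capdom (C e) x -> inF E C v (upd g e x).
Proof.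
  intros Hg Hx e' He'. unfold upd. destruct (edge_eqb e' e) eqn:Q; auto.
  apply edge_eqb_eq in Q; subst; auto.
Qed.

Lemma fold_keep (f : edge -> R) L g e' : g e' = f e' ->
  fold_left (fun g e => upd g e (f e)) L g e' = f e'.
Proof.
  revert g; induction L; simpl; intros g H; auto. apply IHL.
  unfold upd. destruct (edge_eqb e' a) eqn:Q; auto. apply edge_eqb_eq in Q; subst; auto.
Qed.

Lemma fold_in (f : edge -> R) L g e' : In e' L ->
  fold_left (fun g e => upd g e (f e)) L g e' = f e'.
Proof.
  revert g; induction L; simpl; intros g H; [contradiction|].
  destruct H as [H|H].
  - subst. apply fold_keep. apply upd_same.
  - apply IHL; auto.
Qed.

Theorem lemma1
  (n : nat) (E : list edge) (C : edge -> option R) (Ps : list (list edge))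
  (G : nat -> (edge -> R) -> (list edge -> R) -> edge -> R)
  (Hgraph : good_graph n E)
  (Hcap : forall e c, In e E -> C e = Some c -> 0 < c)
  (HPs : enum_paths n E Ps)
  (* G^v is a function of f_{E_v^+} only *)
  (Hloc : forall v pi f g, (v < n)%nat -> inPi n E C Ps pi ->
     (forall e, In e (out_edges E v) -> f e = g e) -> G v f pi = G v g pi)
  (* G^v takes values in the simplex S(E_v^+) *)
  (Hsimplex : forall v pi f, (v < n)%nat -> inPi n E C Ps pi -> inF E C v f ->
     (forall e, In e (out_edges E v) -> 0 <= G v f pi e) /\
     lsum (out_edges E v) (G v f pi) = 1)
  (* continuous differentiability in f_{E_v^+} on F_v, and cooperativity *)
  (HC1 : forall v pi, (v < n)%nat -> inPi n E C Ps pi ->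
     exists dG : edge -> edge -> (edge -> R) -> R,
       (forall j e f, In j (out_edges E v) -> In e (out_edges E v) -> inF E C v f ->
          deriv_within (capdom (C e)) (fun x => G v (upd f e x) pi j) (f e) (dG j e f)) /\
       (forall j e, In j (out_edges E v) -> In e (out_edges E v) ->
          cont_on_F E C v (dG j e)) /\
       (forall j e f, In j (out_edges E v) -> In e (out_edges E v) -> j <> e ->
          inF E C v f -> 0 <= dG j e f))
  (* consistency *)
  (Hcons : forall v pi e, (v < n)%nat -> inPi n E C Ps pi -> In e (out_edges E v) ->
     lam E Ps pi v * G v (flow Ps pi) pi e = flow Ps pi e) :
  forall v pi f, (v < n)%nat -> inPi n E C Ps pi -> inF E C v f ->
    lsum (out_edges E v)
      (fun e => sgn (f e - flow Ps pi e) * (lam E Ps pi v * G v f pi e - flow Ps pi e)) <= 0.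
Proof.
  intros v pi f Hv Hpi Hf.
  destruct (HC1 v pi Hv Hpi) as [dG [Hd1 [_ Hd3]]].
  pose proof Hpi as [_ [Hpin [_ Hpicap]]].
  set (out := out_edges E v) in *.
  set (fp := flow Ps pi) in *.
  set (sg := fun j => sgn (f j - fp j)).
  set (Phi := fun g => lsum out (fun j => sg j * G v g pi j)).
  assert (Hfpnn : forall e, 0 <= fp e).
  { intro e. unfold fp, flow. apply lsum_nonneg. intros p _.
    destruct existsb; [apply Hpin| lra]. }
  assert (Hfp : inF E C v fp).
  { intros e He. split; auto. apply Hpicap.
    unfold out_edges in He. apply filter_In in He. tauto. }
  assert (Hsum0 : forall g e, inF E C v g -> In e out ->
            lsum out (fun j => dG j e g) = 0).
  { intros g e Hg He.
    apply (dw_const_zero (capdom (C e)) (fun y => lsum out (fun j => G v (upd g e y) pi j))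
             (g e) _ 1).
    - intros y Hy. apply (Hsimplex v pi _ Hv Hpi). apply inF_upd; auto.
    - apply Hg; auto.
    - apply capdom_h. apply Hg; auto.
    - apply dw_lsum. intros j Hj. apply Hd1; auto. }
  assert (Hstep : forall g e, inF E C v g -> In e out -> (g e = fp e \/ g e = f e) ->
            Phi (upd g e (f e)) <= Phi g).
  { intros g e Hg He [Hge|Hge]; [| rewrite <- Hge, upd_id; lra].
    set (rho := fun x => Phi (upd g e x)).
    set (D := fun x => lsum out (fun j => sg j * dG j e (upd g e x))).
    assert (Hder : forall x, capdom (C e) x -> deriv_within (capdom (C e)) rho x (D x)).
    { intros x Hx. unfold rho, Phi, D. apply dw_lsum. intros j Hj. apply dw_scal.
      assert (Hgx : inF E C v (upd g e x)) by (apply inF_upd; auto).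
      specialize (Hd1 j e (upd g e x) Hj He Hgx). rewrite upd_same in Hd1.
      assert (Hfe : (fun y => G v (upd (upd g e x) e y) pi j) = (fun y => G v (upd g e y) pi j))
        by (apply functional_extensionality; intro; now rewrite upd_upd).
      rewrite Hfe in Hd1. exact Hd1. }
    assert (Hra : rho (fp e) = Phi g) by (unfold rho; rewrite <- Hge, upd_id; auto).
    change (rho (f e) <= Phi g). rewrite <- Hra.
    assert (Ha := Hfp e He). assert (Hb := Hf e He).
    destruct (Rtotal_order (fp e) (f e)) as [Hlt|[Heq|Hgt]].
    - assert (Hs : sg e = 1) by (unfold sg, sgn; destruct (Rlt_dec 0 (f e - fp e)); lra).
      apply (mono_dec (capdom (C e)) rho D); [lra| | |].
      + intros x Hx; apply (capdom_between _ (fp e) (f e)); auto; lra.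
      + intros x Hx; apply Hder; apply (capdom_between _ (fp e) (f e)); auto; lra.
      + intros x Hx. assert (Hx' : capdom (C e) x) by (apply (capdom_between _ (fp e) (f e)); auto; lra).
        assert (Hgx : inF E C v (upd g e x)) by (apply inF_upd; auto).
        rewrite <- (Hsum0 _ e Hgx He). unfold D. apply lsum_le. intros j Hj.
        destruct (edge_dec j e) as [Q|Q].
        * subst. rewrite Hs; lra.
        * assert (j <> e) by exact Q.
          assert (0 <= dG j e (upd g e x)) by (apply Hd3; auto).
          pose proof (sgn_bound (f j - fp j)). unfold sg. nra.
    - rewrite Heq; lra.
    - assert (Hs : sg e = -1).
      { unfold sg, sgn; destruct (Rlt_dec 0 (f e - fp e)); [lra|].
        destruct (Rlt_dec (f e - fp e) 0); lra. }
      apply (mono_inc (capdom (C e)) rho D); [lra| | |].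
      + intros x Hx; apply (capdom_between _ (f e) (fp e)); auto; lra.
      + intros x Hx; apply Hder; apply (capdom_between _ (f e) (fp e)); auto; lra.
      + intros x Hx. assert (Hx' : capdom (C e) x) by (apply (capdom_between _ (f e) (fp e)); auto; lra).
        assert (Hgx : inF E C v (upd g e x)) by (apply inF_upd; auto).
        assert (0 = - lsum out (fun j => dG j e (upd g e x))) by (rewrite (Hsum0 _ e Hgx He); lra).
        rewrite H, <- lsum_opp. unfold D. apply lsum_le. intros j Hj.
        destruct (edge_dec j e) as [Q|Q].
        * subst. rewrite Hs; lra.
        * assert (j <> e) by exact Q.
          assert (0 <= dG j e (upd g e x)) by (apply Hd3; auto).
          pose proof (sgn_bound (f j - fp j)). unfold sg. nra. }
  assert (Hind : forall L, (forall e, In e L -> In e out) -> forall g, inF E C v g ->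
            (forall e, In e out -> g e = fp e \/ g e = f e) ->
            Phi (fold_left (fun g e => upd g e (f e)) L g) <= Phi g).
  { induction L as [|a L IH]; simpl; intros HL g Hg Hinv; [lra|].
    eapply Rle_trans; [apply IH| apply Hstep; auto].
    - intros; apply HL; auto.
    - apply inF_upd; auto.
    - intros e' He'. unfold upd. destruct (edge_eqb e' a) eqn:Q; auto.
      apply edge_eqb_eq in Q; subst; auto. }
  assert (HPhi : Phi f <= Phi fp).
  { specialize (Hind out (fun e H => H) fp Hfp (fun e _ => or_introl eq_refl)).
    replace (Phi f) with (Phi (fold_left (fun g e => upd g e (f e)) out fp)); auto.
    unfold Phi. rewrite (Hloc v pi _ f Hv Hpi); auto.
    intros; apply fold_in; auto. }
  assert (Hlam : 0 <= lam E Ps pi v) by (apply lsum_nonneg; auto).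
  set (lm := lam E Ps pi v) in *.
  rewrite (lsum_ext _ _ (fun j => lm * (sg j * G v f pi j) - lm * (sg j * G v fp pi j))).
  - rewrite lsum_lin. fold (Phi f) (Phi fp).
    assert (0 <= lm * (Phi fp - Phi f)) by (apply Rmult_le_pos; lra). nra.
  - intros j Hj. unfold sg. assert (Hc := Hcons v pi j Hv Hpi Hj). fold fp lm in Hc. rewrite <- Hc at 2. ring.
Qed.
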